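(* For every constant $c>0$ there is a constant $c'>0$ such that the following holds. Let $G$ be a finite simple graph with maximum degree $d\ge 1$, and let $D(G)$ be a straight-line drawing of $G$ in the base plane $\mathcal{P}_1=\{z=0\}\subset\mathbb{R}^3$ with distinct vertex positions and angular resolution at least $c/d$ (i.e., any two distinct edges incident to a common vertex form an angle at least $c/d$ in $D(G)$). Then there is a 3D arc diagram drawing of $G$ with base plane $\mathcal{P}_1$ and with the same vertex positions as $D(G)$ (so every arc projects perpendicularly onto the corresponding straight-line edge of $D(G)$) whose angular resolution is at least $c'/\sqrt{d}$.
   Context: A 3D arc diagram drawing of $G$ with base plane $\mathcal{P}_1=\{z=0\}$ is a placement of the vertices at distinct points of $\mathcal{P}_1$, together with, for each edge $e=(a,b)$, a circular arc (a contiguous subset of a circle; a straight segment is allowed as the degenerate case) with endpoints at the positions of $a$ and $b$, such that: the arc lies in the plane $\mathcal{P}_2$ containing the segment $ab$ and perpendicular to $\mathcal{P}_1$ (so the arc projects perpendicularly onto the segment $ab$ in $\mathcal{P}_1$); all arcs lie in the closed half-space $z\ge 0$; and the arc forms the same angle $\alpha_e\in[0,\pi/2]$ with the segment $ab$ at both of its endpoints. The angle between two arcs incident to a common vertex $v$ is the angle in $[0,\pi]$ between their tangent rays at $v$ (directed into the arcs). The angular resolution of the drawing is the minimum of this angle over all vertices $v$ and all pairs of distinct edges incident to $v$. The angular resolution of a 2D straight-line drawing is defined analogously using the segments themselves. *)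

(* Defs.v *)
From Stdlib Require Import Reals Lra List.
Import ListNotations.
Open Scope R_scope.

Definition simple_graph (n : nat) (E : nat -> nat -> bool) : Prop :=
  (forall u v, E u v = E v u) /\
  (forall v, E v v = false) /\
  (forall u v, E u v = true -> (u < n)%nat /\ (v < n)%nat).

Definition degree (n : nat) (E : nat -> nat -> bool) (v : nat) : nat :=
  length (filter (E v) (seq 0 n)).

Definition max_degree (n : nat) (E : nat -> nat -> bool) (d : nat) : Prop :=
  (forall v, (v < n)%nat -> (degree n E v <= d)%nat) /\
  (exists v, (v < n)%nat /\ degree n E v = d).

Definition vec3 : Type := (R * R * R)%type.
Definition dot3 (a b : vec3) : R :=
  let '(a1, a2, a3) := a in let '(b1, b2, b3) := b in a1 * b1 + a2 * b2 + a3 * b3.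
Definition norm3 (a : vec3) : R := sqrt (dot3 a a).

Definition angle3 (a b : vec3) : R := acos (dot3 a b / (norm3 a * norm3 b)).

Definition pos3 (p : nat -> R * R) (v : nat) : vec3 := (fst (p v), snd (p v), 0).

Definition sub3 (a b : vec3) : vec3 :=
  let '(a1, a2, a3) := a in let '(b1, b2, b3) := b in (a1 - b1, a2 - b2, a3 - b3).

Definition distinct_positions (n : nat) (p : nat -> R * R) : Prop :=
  forall u v, (u < n)%nat -> (v < n)%nat -> u <> v -> p u <> p v.

Definition straight_angres_ge (n : nat) (E : nat -> nat -> bool)
    (p : nat -> R * R) (r : R) : Prop :=
  forall v u w, E v u = true -> E v w = true -> u <> w ->
    r <= angle3 (sub3 (pos3 p u) (pos3 p v)) (sub3 (pos3 p w) (pos3 p v)).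

(** For an edge e = (a,b), the arc lies in the vertical plane through ab,
    in z >= 0, and makes the same angle alpha_e in [0, pi/2] with the
    segment ab at both endpoints; such a circular arc (a straight segment
    when alpha_e = 0) is uniquely determined by alpha_e.  We represent the
    drawing by the family [alpha] of these angles (symmetric in the edge). *)
Definition arc_diagram (n : nat) (E : nat -> nat -> bool)
    (alpha : nat -> nat -> R) : Prop :=
  forall a b, E a b = true ->
    alpha a b = alpha b a /\ 0 <= alpha a b <= PI / 2.

(** The circular arc of edge (a,b) with angle alpha (0 < alpha <= pi/2):
    centre c = m - h*z_hat with m the midpoint of ab, L = |ab|/2,
    h = L / tan alpha, radius L / sin alpha; the arc is the set of points
    of that circle in the vertical plane through ab with z >= 0.
    Its unit tangent ray at endpoint a, directed into the arc, is
    cos(alpha) * (b - a)/|b - a| + sin(alpha) * z_hat (this also holds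
    for the degenerate straight segment alpha = 0). *)
Definition arc_tangent (p : nat -> R * R) (alpha : nat -> nat -> R)
    (a b : nat) : vec3 :=
  let '(x, y, _) := sub3 (pos3 p b) (pos3 p a) in
  let l := sqrt (x * x + y * y) in
  (cos (alpha a b) * (x / l), cos (alpha a b) * (y / l), sin (alpha a b)).

Definition arc_angres_ge (n : nat) (E : nat -> nat -> bool)
    (p : nat -> R * R) (alpha : nat -> nat -> R) (r : R) : Prop :=
  forall v u w, E v u = true -> E v w = true -> u <> w ->
    r <= angle3 (arc_tangent p alpha v u) (arc_tangent p alpha v w).

(* Main.v *)
Require Import Defs.
From Stdlib Require Import Reals Lra Lia ZArith.
Open Scope R_scope.
Lemma cos_lb a : -2 <= a <= 2 -> 1 - a*a/2 <= cos a.
Proof.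
  intros H. destruct (pre_cos_bound a 0 ltac:(lra) ltac:(lra)) as [H1 _].
  unfold cos_approx, cos_term in H1. simpl in H1. lra.
Qed.
Lemma cos_ub a : -2 <= a <= 2 -> cos a <= 1 - a*a/2 + a*a*a*a/24.
Proof.
  intros H. destruct (pre_cos_bound a 0 ltac:(lra) ltac:(lra)) as [_ H1].
  unfold cos_approx, cos_term in H1. simpl in H1. lra.
Qed.
Lemma one_minus_cos t : -1 <= t <= 1 -> t*t/3 <= 1 - cos t.
Proof.
  intros H. pose proof (cos_ub t ltac:(lra)).
  assert (t*t <= 1) by nra. assert (0 <= t*t) by nra. nra.
Qed.
Lemma acos_ge D x : -1 <= D <= 1 -> 0 <= x <= PI -> D <= cos x -> x <= acos D.
Proof.
  intros HD Hx Hc. destruct (Rle_lt_dec x (acos D)) as [h|h]; auto.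
  pose proof (acos_bound D).
  assert (cos x < cos (acos D)) by (apply cos_decreasing_1; lra).
  rewrite cos_acos in H0; lra.
Qed.
Lemma acos_le C y : -1 <= C <= 1 -> 0 <= y <= PI -> y <= acos C -> C <= cos y.
Proof.
  intros HC Hy H. destruct (Rle_lt_dec C (cos y)) as [h|h]; auto.
  pose proof (acos_bound C).
  rewrite <- (cos_acos C HC) in h.
  apply cos_decreasing_0 in h; lra.
Qed.
Definition frac (r : R) := r - IZR (Int_part r).
Lemma frac_range r : 0 <= frac r < 1.
Proof. unfold frac. pose proof (base_Int_part r). lra. Qed.
Lemma frac_diff a b : Rabs (a - b) <= 1/2 -> Rabs (a - b) <= Rabs (frac a - frac b).
Proof.
  intros H. unfold frac.
  replace (a - IZR (Int_part a) - (b - IZR (Int_part b))) with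
    (a - b - IZR (Int_part a - Int_part b)) by (rewrite minus_IZR; ring).
  set (k := (Int_part a - Int_part b)%Z).
  destruct (Z.eq_dec k 0) as [e|n].
  - rewrite e. replace (a - b - IZR 0) with (a-b) by (simpl; ring). lra.
  - assert (IZR k >= 1 \/ IZR k <= -1).
    { destruct (Z_le_gt_dec k (-1)) as [h|h].
      + right. apply IZR_le in h. lra.
      + left. apply Rle_ge. apply IZR_le. lia. }
    revert H; unfold Rabs; repeat destruct Rcase_abs; lra.
Qed.
Lemma abs_sq x : Rabs x * Rabs x = x * x.
Proof. rewrite <- Rabs_mult. apply Rabs_right. nra. Qed.
Lemma region P1 Q1 P2 Q2 :
  P1*P1+Q1*Q1 = 1 -> P2*P2+Q2*Q2 = 1 -> Rabs P1 <= Rabs Q1 -> Rabs P2 <= Rabs Q2 ->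
  (P1-P2)*(P1-P2)+(Q1-Q2)*(Q1-Q2) <= 1/4 -> (Q1-Q2)*(Q1-Q2) <= (P1-P2)*(P1-P2).
Proof.
  intros h1 h2 r1 r2 hs.
  assert (P1*P1 <= Q1*Q1).
  { rewrite <- (abs_sq P1), <- (abs_sq Q1). apply Rmult_le_compat; auto using Rabs_pos. }
  assert (P2*P2 <= Q2*Q2).
  { rewrite <- (abs_sq P2), <- (abs_sq Q2). apply Rmult_le_compat; auto using Rabs_pos. }
  assert (e1: (Q1-Q2)*(Q1-Q2) = Q1*Q1+Q2*Q2-2*(Q1*Q2)) by ring.
  assert (e2: (Q1+Q2)*(Q1+Q2) = Q1*Q1+Q2*Q2+2*(Q1*Q2)) by ring.
  assert (e3: (P1+P2)*(P1+P2) = P1*P1+P2*P2+2*(P1*P2)) by ring.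
  assert (e4: (P1-P2)*(P1-P2) = P1*P1+P2*P2-2*(P1*P2)) by ring.
  assert (0 <= (P1-P2)*(P1-P2)) by apply Rle_0_sqr.
  assert (0 <= Q1*Q2) by lra.
  assert (Rabs (P1*P2) <= Q1*Q2).
  { rewrite Rabs_mult. rewrite <- (Rabs_right (Q1*Q2)) by lra. rewrite Rabs_mult.
    apply Rmult_le_compat; auto using Rabs_pos. }
  assert (P1*P2 <= Rabs (P1*P2)) by apply Rle_abs.
  assert (- (P1*P2) <= Rabs (P1*P2)) by (rewrite <- Rabs_Ropp; apply Rle_abs).
  assert (1 <= (Q1+Q2)*(Q1+Q2)) by lra.
  assert ((P1+P2)*(P1+P2) <= (Q1+Q2)*(Q1+Q2)) by lra.
  assert (e5: (Q1-Q2)*(Q1+Q2) = -((P1-P2)*(P1+P2))).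
  { replace ((Q1-Q2)*(Q1+Q2)) with (Q1*Q1-Q2*Q2) by ring.
    replace ((P1-P2)*(P1+P2)) with (P1*P1-P2*P2) by ring. lra. }
  assert (E: (Q1-Q2)*(Q1-Q2)*((Q1+Q2)*(Q1+Q2)) = (P1-P2)*(P1-P2)*((P1+P2)*(P1+P2))).
  { replace ((Q1-Q2)*(Q1-Q2)*((Q1+Q2)*(Q1+Q2))) with (((Q1-Q2)*(Q1+Q2))*((Q1-Q2)*(Q1+Q2))) by ring.
    rewrite e5. ring. }
  assert ((Q1-Q2)*(Q1-Q2)*((Q1+Q2)*(Q1+Q2)) <= (P1-P2)*(P1-P2)*((Q1+Q2)*(Q1+Q2))).
  { rewrite E. apply Rmult_le_compat_l; [apply Rle_0_sqr|lra]. }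
  apply Rmult_le_reg_r with ((Q1+Q2)*(Q1+Q2)); lra.
Qed.
Definition G (sd X Y : R) : R :=
  if Rle_dec (Rabs X) (Rabs Y) then /4 * frac (sd*X) else 1/2 + /4 * frac (sd*Y).
Lemma G_range sd X Y : 0 <= G sd X Y <= 3/4.
Proof. unfold G. destruct Rle_dec; pose proof (frac_range (sd*X)); pose proof (frac_range (sd*Y)); lra. Qed.

Lemma same_reg sd rho X1 X2 : 1 <= sd -> rho*(sd*sd) < 1/4 ->
  rho/2 <= (X1-X2)*(X1-X2) -> (X1-X2)*(X1-X2) <= rho ->
  (sd*sd)*rho/32 <= (/4*frac (sd*X1) - /4*frac (sd*X2))*(/4*frac (sd*X1) - /4*frac (sd*X2)).
Proof.
  intros hsd hr h1 h2.
  assert (E: (sd*X1 - sd*X2)*(sd*X1-sd*X2) = (sd*sd)*((X1-X2)*(X1-X2))) by ring.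
  assert (0 <= sd*sd) by nra.
  assert ((sd*X1 - sd*X2)*(sd*X1-sd*X2) < 1/4).
  { rewrite E. assert (sd*sd*((X1-X2)*(X1-X2)) <= sd*sd*rho) by (apply Rmult_le_compat_l; lra). lra. }
  assert (Rabs (sd*X1 - sd*X2) <= 1/2).
  { destruct (Rle_lt_dec (Rabs (sd*X1 - sd*X2)) (1/2)) as [h|h]; auto.
    rewrite <- (abs_sq (sd*X1 - sd*X2)) in H0. nra. }
  pose proof (frac_diff _ _ H1) as F.
  assert ((sd*X1 - sd*X2)*(sd*X1-sd*X2) <= (frac (sd*X1) - frac (sd*X2))*(frac (sd*X1) - frac (sd*X2))).
  { rewrite <- (abs_sq (sd*X1 - sd*X2)), <- (abs_sq (frac (sd*X1) - frac (sd*X2))).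
    apply Rmult_le_compat; auto using Rabs_pos. }
  replace ((/4*frac (sd*X1) - /4*frac (sd*X2))*(/4*frac (sd*X1) - /4*frac (sd*X2))) with
    ((frac (sd*X1) - frac (sd*X2))*(frac (sd*X1) - frac (sd*X2))/16) by field.
  rewrite E in H2.
  assert ((sd*sd)*(rho/2) <= (sd*sd)*((X1-X2)*(X1-X2))) by (apply Rmult_le_compat_l; lra).
  lra.
Qed.
Lemma core sd k a1 b1 a2 b2 : 1 <= sd -> 0 < k <= 1/8 ->
  a1*a1+b1*b1 = 1 -> a2*a2+b2*b2 = 1 ->
  k <= (1 - (a1*a2+b1*b2)) * ((sd*sd)*(sd*sd)) ->
  k/24 <= (1 - (cos (G sd (a1*a1-b1*b1) (2*a1*b1)) * cos (G sd (a2*a2-b2*b2) (2*a2*b2)) * (a1*a2+b1*b2)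
               + sin (G sd (a1*a1-b1*b1) (2*a1*b1)) * sin (G sd (a2*a2-b2*b2) (2*a2*b2)))) * (sd*sd).
Proof.
  intros hsd hk h1 h2 he.
  set (X1 := a1*a1-b1*b1). set (Y1 := 2*a1*b1). set (X2 := a2*a2-b2*b2). set (Y2 := 2*a2*b2).
  set (c := a1*a2+b1*b2).
  assert (u1 : X1*X1+Y1*Y1 = 1).
  { replace (X1*X1+Y1*Y1) with ((a1*a1+b1*b1)*(a1*a1+b1*b1)) by (unfold X1, Y1; ring). rewrite h1; ring. }
  assert (u2 : X2*X2+Y2*Y2 = 1).
  { replace (X2*X2+Y2*Y2) with ((a2*a2+b2*b2)*(a2*a2+b2*b2)) by (unfold X2, Y2; ring). rewrite h2; ring. }
  assert (hc : c*c <= 1).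
  { assert (E: (a1*a1+b1*b1)*(a2*a2+b2*b2) = c*c + (a1*b2-a2*b1)*(a1*b2-a2*b1)) by (unfold c; ring).
    rewrite h1, h2 in E. pose proof (Rle_0_sqr (a1*b2-a2*b1)). unfold Rsqr in H. lra. }
  assert (hc2 : -1 <= c <= 1) by nra.
  assert (hrho : (X1-X2)*(X1-X2)+(Y1-Y2)*(Y1-Y2) = 4*(1-c)*(1+c)).
  { assert (E: X1*X2+Y1*Y2 = 2*(c*c) - (a1*a1+b1*b1)*(a2*a2+b2*b2)) by (unfold X1,X2,Y1,Y2,c; ring).
    rewrite h1, h2 in E.
    replace ((X1-X2)*(X1-X2)+(Y1-Y2)*(Y1-Y2)) with ((X1*X1+Y1*Y1)+(X2*X2+Y2*Y2)-2*(X1*X2+Y1*Y2)) by ring.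
    rewrite u1, u2, E. ring. }
  set (al1 := G sd X1 Y1). set (al2 := G sd X2 Y2).
  pose proof (G_range sd X1 Y1) as r1. pose proof (G_range sd X2 Y2) as r2.
  fold al1 al2 in r1, r2.
  assert (c1 : 23/32 <= cos al1) by (pose proof (cos_lb al1 ltac:(lra)); nra).
  assert (c2 : 23/32 <= cos al2) by (pose proof (cos_lb al2 ltac:(lra)); nra).
  assert (cc : 1/2 <= cos al1 * cos al2) by nra.
  set (S := sd*sd).
  assert (hS : 1 <= S) by (unfold S; nra).
  set (e := 1 - c).
  assert (he' : k <= e*(S*S)) by (unfold e, c, S; exact he).
  assert (epos : 0 < e).
  { destruct (Rlt_le_dec 0 e) as [h|h]; auto. assert (e*(S*S) <= 0).
    { assert (0 <= S*S) by nra. assert (0 <= (-e)*(S*S)) by (apply Rmult_le_pos; lra).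
      replace (e*(S*S)) with (-((-e)*(S*S))) by ring. lra. } lra. }
  assert (ID : 1 - (cos al1 * cos al2 * c + sin al1 * sin al2) = (1 - cos (al1 - al2)) + cos al1 * cos al2 * e).
  { rewrite cos_minus. unfold e. ring. }
  rewrite ID.
  assert (hD : -1 <= al1 - al2 <= 1) by lra.
  pose proof (one_minus_cos _ hD) as hD2.
  assert (0 <= (al1-al2)*(al1-al2)) by apply Rle_0_sqr.
  destruct (Rle_lt_dec 1 (32*S*e)) as [big|small].
  - assert (e/2 <= cos al1 * cos al2 * e) by nra.
    assert (1/64 <= e*S/2) by lra.
    assert (e*S/2 <= (1 - cos (al1 - al2) + cos al1 * cos al2 * e) * S) by nra.
    lra.
  - set (rho := (X1-X2)*(X1-X2)+(Y1-Y2)*(Y1-Y2)).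
    assert (hr1 : 4*e <= rho /\ rho <= 8*e).
    { unfold rho; rewrite hrho. fold e. replace (1+c) with (2-e) by (unfold e; ring).
      assert (e <= 1/32) by nra. split; nra. }
    assert (hrS : rho*S < 1/4) by nra.
    assert (hr4 : rho <= 1/4) by nra.
    assert (qx : 0 <= (X1-X2)*(X1-X2)) by apply Rle_0_sqr.
    assert (qy : 0 <= (Y1-Y2)*(Y1-Y2)) by apply Rle_0_sqr.
    assert (key : S*rho/32 <= (al1-al2)*(al1-al2) \/ 1/16 <= (al1-al2)*(al1-al2)).
    { unfold al1, al2, G.
      destruct (Rle_dec (Rabs X1) (Rabs Y1)) as [g1|g1];
      destruct (Rle_dec (Rabs X2) (Rabs Y2)) as [g2|g2].
      - left. apply same_reg; auto.
        + pose proof (region X1 Y1 X2 Y2 u1 u2 g1 g2 ltac:(fold rho; lra)). unfold rho in *; lra.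
        + unfold rho in *; lra.
      - right. pose proof (frac_range (sd*X1)); pose proof (frac_range (sd*Y2)). nra.
      - right. pose proof (frac_range (sd*Y1)); pose proof (frac_range (sd*X2)). nra.
      - left.
        replace (1 / 2 + / 4 * frac (sd * Y1) - (1 / 2 + / 4 * frac (sd * Y2))) with
          (/4 * frac (sd*Y1) - /4 * frac (sd*Y2)) by ring.
        apply same_reg; auto.
        + assert (w1: Y1*Y1+X1*X1 = 1) by lra. assert (w2: Y2*Y2+X2*X2 = 1) by lra.
          pose proof (region Y1 X1 Y2 X2 w1 w2 (Rlt_le _ _ (Rnot_le_lt _ _ g1)) (Rlt_le _ _ (Rnot_le_lt _ _ g2)) ltac:(unfold rho in hr4; lra)).
          unfold rho in *; lra.
        + unfold rho in *; lra. }
    assert (0 <= cos al1 * cos al2 * e) by nra.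
    destruct key as [k1|k1].
    + assert (S*(4*e)/32 <= S*rho/32) by nra.
      assert (S*e/24 <= 1 - cos (al1 - al2)) by lra.
      assert (S*e/24*S <= (1 - cos (al1 - al2) + cos al1 * cos al2 * e) * S) by nra.
      assert (e*(S*S) = S*e*S) by ring. lra.
    + assert (1/48 <= 1 - cos (al1 - al2)) by lra.
      assert (1/48 <= (1 - cos (al1 - al2) + cos al1 * cos al2 * e) * S) by nra.
      lra.
Qed.
Definition dX (x y : R) : R := (x*x - y*y)/(x*x+y*y).
Definition dY (x y : R) : R := 2*x*y/(x*x+y*y).
Definition alphaF (sd : R) (p : nat -> R * R) (a b : nat) : R :=
  G sd (dX (fst (p b) - fst (p a)) (snd (p b) - snd (p a)))
       (dY (fst (p b) - fst (p a)) (snd (p b) - snd (p a))).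

Lemma dX_opp x y : dX (-x) (-y) = dX x y.
Proof. unfold dX. f_equal; ring. Qed.
Lemma dY_opp x y : dY (-x) (-y) = dY x y.
Proof. unfold dY. f_equal; ring. Qed.
Lemma alphaF_sym sd p a b : alphaF sd p a b = alphaF sd p b a.
Proof.
  unfold alphaF.
  replace (fst (p a) - fst (p b)) with (- (fst (p b) - fst (p a))) by ring.
  replace (snd (p a) - snd (p b)) with (- (snd (p b) - snd (p a))) by ring.
  rewrite dX_opp, dY_opp. reflexivity.
Qed.

Lemma pos_len (q r : R * R) : q <> r -> 0 < (fst q - fst r)*(fst q - fst r) + (snd q - snd r)*(snd q - snd r).
Proof.
  intros H. destruct q as [q1 q2], r as [r1 r2]; simpl.
  destruct (Req_dec q1 r1); destruct (Req_dec q2 r2).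
  - subst; congruence.
  - assert (0 < (q2-r2)*(q2-r2)) by (apply Rsqr_pos_lt; lra). pose proof (Rle_0_sqr (q1-r1)). unfold Rsqr in *. lra.
  - assert (0 < (q1-r1)*(q1-r1)) by (apply Rsqr_pos_lt; lra). pose proof (Rle_0_sqr (q2-r2)). unfold Rsqr in *. lra.
  - assert (0 < (q1-r1)*(q1-r1)) by (apply Rsqr_pos_lt; lra). pose proof (Rle_0_sqr (q2-r2)). unfold Rsqr in *. lra.
Qed.

Lemma dX_unit x y : 0 < x*x+y*y ->
  dX x y = (x / sqrt (x*x+y*y))*(x / sqrt (x*x+y*y)) - (y / sqrt (x*x+y*y))*(y / sqrt (x*x+y*y)).
Proof.
  intros H. unfold dX. pose proof (sqrt_sqrt (x*x+y*y) ltac:(lra)) as E.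
  assert (sqrt (x*x+y*y) <> 0) by (apply Rgt_not_eq, sqrt_lt_R0; lra).
  set (l := sqrt (x*x+y*y)) in *. rewrite <- E. field; auto.
Qed.
Lemma dY_unit x y : 0 < x*x+y*y ->
  dY x y = 2*(x / sqrt (x*x+y*y))*(y / sqrt (x*x+y*y)).
Proof.
  intros H. unfold dY. pose proof (sqrt_sqrt (x*x+y*y) ltac:(lra)) as E.
  assert (sqrt (x*x+y*y) <> 0) by (apply Rgt_not_eq, sqrt_lt_R0; lra).
  set (l := sqrt (x*x+y*y)) in *. rewrite <- E. field; auto.
Qed.
Lemma unit_ab x y : 0 < x*x+y*y ->
  (x / sqrt (x*x+y*y))*(x / sqrt (x*x+y*y)) + (y / sqrt (x*x+y*y))*(y / sqrt (x*x+y*y)) = 1.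
Proof.
  intros H. pose proof (sqrt_sqrt (x*x+y*y) ltac:(lra)) as E.
  assert (sqrt (x*x+y*y) <> 0) by (apply Rgt_not_eq, sqrt_lt_R0; lra).
  set (l := sqrt (x*x+y*y)) in *.
  replace (x/l*(x/l)+y/l*(y/l)) with ((x*x+y*y)/(l*l)) by (field; auto).
  rewrite E. field. lra.
Qed.
Lemma angle_flat x1 y1 x2 y2 : 0 < x1*x1+y1*y1 -> 0 < x2*x2+y2*y2 ->
  angle3 (x1, y1, 0-0) (x2, y2, 0-0) =
  acos ((x1 / sqrt (x1*x1+y1*y1))*(x2 / sqrt (x2*x2+y2*y2)) + (y1 / sqrt (x1*x1+y1*y1))*(y2 / sqrt (x2*x2+y2*y2))).
Proof.
  intros h1 h2. cbv beta iota zeta delta [angle3 dot3 norm3]. f_equal.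
  replace (0-0) with 0 by ring. rewrite !Rmult_0_l, !Rplus_0_r.
  assert (sqrt (x1*x1+y1*y1) <> 0) by (apply Rgt_not_eq, sqrt_lt_R0; lra).
  assert (sqrt (x2*x2+y2*y2) <> 0) by (apply Rgt_not_eq, sqrt_lt_R0; lra).
  field; auto.
Qed.

Lemma angle_tangent a1 b1 a2 b2 t1 t2 : a1*a1+b1*b1 = 1 -> a2*a2+b2*b2 = 1 ->
  angle3 (cos t1 * a1, cos t1 * b1, sin t1) (cos t2 * a2, cos t2 * b2, sin t2) =
  acos (cos t1 * cos t2 * (a1*a2+b1*b2) + sin t1 * sin t2).
Proof.
  intros h1 h2. cbv beta iota zeta delta [angle3 dot3 norm3].
  assert (forall t a b, a*a+b*b = 1 -> cos t * a * (cos t * a) + cos t * b * (cos t * b) + sin t * sin t = 1).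
  { intros t a b h. replace (cos t * a * (cos t * a) + cos t * b * (cos t * b) + sin t * sin t)
      with (cos t * cos t * (a*a+b*b) + sin t * sin t) by ring. rewrite h.
    pose proof (sin2_cos2 t). unfold Rsqr in H. lra. }
  rewrite (H t1 a1 b1 h1), (H t2 a2 b2 h2), sqrt_1. f_equal. field.
Qed.
Lemma vertex (c dR : R) p v u w : 0 < c -> 1 <= dR ->
  p u <> p v -> p w <> p v ->
  c / dR <= angle3 (sub3 (pos3 p u) (pos3 p v)) (sub3 (pos3 p w) (pos3 p v)) ->
  (Rmin c 1 * Rmin c 1 / 8) / 24 / sqrt dR <=
  angle3 (arc_tangent p (alphaF (sqrt dR) p) v u) (arc_tangent p (alphaF (sqrt dR) p) v w).
Proof.
  intros hc hd nu nw Hs.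
  set (m := Rmin c 1). set (k := m*m/8). set (sd := sqrt dR).
  set (x1 := fst (p u) - fst (p v)). set (y1 := snd (p u) - snd (p v)).
  set (x2 := fst (p w) - fst (p v)). set (y2 := snd (p w) - snd (p v)).
  assert (q1 : 0 < x1*x1+y1*y1) by exact (pos_len _ _ nu).
  assert (q2 : 0 < x2*x2+y2*y2) by exact (pos_len _ _ nw).
  set (a1 := x1 / sqrt (x1*x1+y1*y1)). set (b1 := y1 / sqrt (x1*x1+y1*y1)).
  set (a2 := x2 / sqrt (x2*x2+y2*y2)). set (b2 := y2 / sqrt (x2*x2+y2*y2)).
  assert (Es : angle3 (sub3 (pos3 p u) (pos3 p v)) (sub3 (pos3 p w) (pos3 p v)) = acos (a1*a2+b1*b2)).
  { exact (angle_flat x1 y1 x2 y2 q1 q2). }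
  rewrite Es in Hs.
  assert (T1 : arc_tangent p (alphaF sd p) v u = (cos (alphaF sd p v u) * a1, cos (alphaF sd p v u) * b1, sin (alphaF sd p v u))) by reflexivity.
  assert (T2 : arc_tangent p (alphaF sd p) v w = (cos (alphaF sd p v w) * a2, cos (alphaF sd p v w) * b2, sin (alphaF sd p v w))) by reflexivity.
  assert (A1 : alphaF sd p v u = G sd (a1*a1-b1*b1) (2*a1*b1)).
  { unfold alphaF. fold x1 y1. rewrite (dX_unit x1 y1 q1), (dY_unit x1 y1 q1). reflexivity. }
  assert (A2 : alphaF sd p v w = G sd (a2*a2-b2*b2) (2*a2*b2)).
  { unfold alphaF. fold x2 y2. rewrite (dX_unit x2 y2 q2), (dY_unit x2 y2 q2). reflexivity. }
  assert (U1 : a1*a1+b1*b1 = 1) by exact (unit_ab x1 y1 q1).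
  assert (U2 : a2*a2+b2*b2 = 1) by exact (unit_ab x2 y2 q2).
  fold sd. rewrite T1, T2, (angle_tangent a1 b1 a2 b2 _ _ U1 U2), A1, A2.
  set (C := a1*a2+b1*b2) in *.
  assert (hCC : C*C <= 1).
  { assert (E: (a1*a1+b1*b1)*(a2*a2+b2*b2) = C*C + (a1*b2-a2*b1)*(a1*b2-a2*b1)) by (unfold C; ring).
    rewrite U1, U2 in E. pose proof (Rle_0_sqr (a1*b2-a2*b1)). unfold Rsqr in H. lra. }
  assert (hC : -1 <= C <= 1) by nra.
  assert (hm : 0 < m <= 1) by (unfold m; split; [apply Rmin_glb_lt; lra | apply Rmin_r]).
  assert (hk : 0 < k <= 1/8) by (unfold k; split; nra).
  assert (Sd : sd * sd = dR) by (unfold sd; apply sqrt_sqrt; lra).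
  assert (sd0 : 0 <= sd) by (unfold sd; apply sqrt_pos).
  assert (hsd : 1 <= sd) by nra.
  set (y := Rmin (c/dR) 1).
  assert (hy1 : y <= c/dR) by apply Rmin_l.
  assert (hy2 : y <= 1) by apply Rmin_r.
  assert (hmy : m / dR <= y).
  { unfold y. apply Rmin_glb.
    - unfold Rdiv. apply Rmult_le_compat_r. { left; apply Rinv_0_lt_compat; lra. } unfold m; apply Rmin_l.
    - apply Rmult_le_reg_r with dR; [lra|]. unfold Rdiv. rewrite Rmult_assoc, Rinv_l by lra. nra. }
  assert (hm0 : 0 < m / dR) by (apply Rdiv_lt_0_compat; lra).
  assert (hCy : C <= cos y) by (apply acos_le; [exact hC | split; [lra | pose proof PI2_1; lra] | lra]).
  pose proof (one_minus_cos y ltac:(lra)).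
  assert (hm2 : (m/dR)*(m/dR) <= y*y) by nra.
  assert (he : k <= (1 - C) * (sd*sd*(sd*sd))).
  { rewrite Sd. assert ((m/dR)*(m/dR)/3 <= 1 - C) by lra.
    assert ((m/dR)*(m/dR)/3*(dR*dR) <= (1-C)*(dR*dR)) by (apply Rmult_le_compat_r; nra).
    replace ((m/dR)*(m/dR)/3*(dR*dR)) with (m*m/3) in H1 by (field; lra).
    unfold k. nra. }
  pose proof (core sd k a1 b1 a2 b2 hsd hk U1 U2 he) as K. fold C in K.
  set (t1 := G sd (a1 * a1 - b1 * b1) (2 * a1 * b1)) in *.
  set (t2 := G sd (a2 * a2 - b2 * b2) (2 * a2 * b2)) in *.
  set (D := cos t1 * cos t2 * C + sin t1 * sin t2) in *.
  assert (r1 : 0 <= t1 <= 3/4) by apply G_range.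
  assert (r2 : 0 <= t2 <= 3/4) by apply G_range.
  pose proof PI2_1.
  assert (0 <= sin t1) by (apply sin_ge_0; lra).
  assert (0 <= sin t2) by (apply sin_ge_0; lra).
  assert (0 <= cos t1) by (apply cos_ge_0; lra).
  assert (0 <= cos t2) by (apply cos_ge_0; lra).
  pose proof (COS_bound t1). pose proof (COS_bound t2).
  assert (0 <= cos t1 * cos t2 <= 1) by nra.
  assert (0 <= sin t1 * sin t2) by nra.
  assert (-1 <= D) by (unfold D; nra).
  assert (D < 1) by (assert (0 < k/24) by lra; nra).
  apply acos_ge; [lra| |].
  - split. { unfold Rdiv; apply Rmult_le_pos; [lra| left; apply Rinv_0_lt_compat; lra]. }
    apply Rle_trans with 1; [|lra]. apply Rmult_le_reg_r with sd; [lra|].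
    unfold Rdiv. rewrite Rmult_assoc, Rinv_l by lra. lra.
  - set (x := k/24/sd).
    assert (0 <= x <= 1).
    { unfold x. split. { unfold Rdiv; apply Rmult_le_pos; [lra| left; apply Rinv_0_lt_compat; lra]. }
      apply Rmult_le_reg_r with sd; [lra|].
      unfold Rdiv. rewrite Rmult_assoc, Rinv_l by lra. lra. }
    pose proof (cos_lb x ltac:(lra)).
    assert (xx : x*x*(sd*sd) = (k/24)*(k/24)) by (unfold x; field; lra).
    assert (x*x*(sd*sd)/2 <= (1-D)*(sd*sd)) by nra.
    assert (x*x/2 <= 1-D) by (apply Rmult_le_reg_r with (sd*sd); nra).
    lra.
Qed.

Theorem theorem4 :
  forall c : R, 0 < c ->
  exists c' : R, 0 < c' /\
    forall (n : nat) (E : nat -> nat -> bool) (d : nat) (p : nat -> R * R),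
      simple_graph n E ->
      max_degree n E d ->
      (1 <= d)%nat ->
      distinct_positions n p ->
      straight_angres_ge n E p (c / INR d) ->
      exists alpha : nat -> nat -> R,
        arc_diagram n E alpha /\
        arc_angres_ge n E p alpha (c' / sqrt (INR d)).
Proof.
  intros c hc. exists ((Rmin c 1 * Rmin c 1 / 8) / 24). split.
  { assert (0 < Rmin c 1) by (apply Rmin_glb_lt; lra). nra. }
  intros n E d p [Hsym [Hirr Hin]] _ hd Hdist Hs.
  exists (alphaF (sqrt (INR d)) p). split.
  - intros a b _. split; [apply alphaF_sym|].
    unfold alphaF. pose proof (G_range (sqrt (INR d))
      (dX (fst (p b) - fst (p a)) (snd (p b) - snd (p a)))
      (dY (fst (p b) - fst (p a)) (snd (p b) - snd (p a)))). pose proof PI2_1. lra.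
  - intros v u w hu hw huw.
    assert (hd' : 1 <= INR d) by (apply (le_INR 1 d) in hd; simpl in hd; lra).
    destruct (Hin _ _ hu) as [hv hu'].
    destruct (Hin _ _ hw) as [_ hw'].
    assert (u <> v) by (intro; subst; rewrite Hirr in hu; discriminate).
    assert (w <> v) by (intro; subst; rewrite Hirr in hw; discriminate).
    apply vertex; auto.
Qed.
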